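(* Let $(X,\mathcal{B},\mu)$ be a $\sigma$-finite measure space and let $\varphi:X\to X$ be a measurable map for which there is $c>0$ with $\mu(\varphi^{-1}(B))\le c\,\mu(B)$ for all $B\in\mathcal{B}$. For $1\le q<\infty$ let $T_\varphi$ denote the composition operator $f\mapsto f\circ\varphi$ on $L^q(X,\mathcal{B},\mu)$. Then for any $p,p'\in[1,\infty)$, $T_\varphi$ is distributionally chaotic on $L^p(X,\mathcal{B},\mu)$ if and only if $T_\varphi$ is distributionally chaotic on $L^{p'}(X,\mathcal{B},\mu)$.
   Context: For $A\subseteq\mathbb{N}$, $\overline{\mathrm{dens}}(A)=\limsup_{N\to\infty}\frac{\operatorname{card}(A\cap[1,N])}{N}$ and $\underline{\mathrm{dens}}(A)=\liminf_{N\to\infty}\frac{\operatorname{card}(A\cap[1,N])}{N}$. An operator $T$ on a Banach space $Y$ is distributionally chaotic if there exist an uncountable set $\Gamma\subset Y$ and $\varepsilon>0$ such that for every $\delta>0$ and every pair of distinct $x,y\in\Gamma$: $\underline{\mathrm{dens}}\{j\in\mathbb{N}:\|T^jx-T^jy\|<\varepsilon\}=0$ and $\overline{\mathrm{dens}}\{j\in\mathbb{N}:\|T^jx-T^jy\|<\delta\}=1$. *)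

(* Defs.v *)
From HB Require Import structures.
From mathcomp Require Import all_boot all_order all_algebra.
From mathcomp Require Import all_classical all_reals all_analysis.
Set Implicit Arguments. Unset Strict Implicit. Unset Printing Implicit Defensive.
Import Order.TTheory GRing.Theory Num.Theory.
Import numFieldNormedType.Exports.
Local Open Scope classical_set_scope.
Local Open Scope ring_scope.

Definition dens_ratio (R : realType) (A : set nat) (N : nat) : R :=
  (\sum_(1 <= j < N.+1) (j \in A : nat))%N%:R / N%:R.

Definition upper_dens (R : realType) (A : set nat) : \bar R :=
  limn_esup (fun N => (dens_ratio R A N)%:E).
Definition lower_dens (R : realType) (A : set nat) : \bar R :=
  limn_einf (fun N => (dens_ratio R A N)%:E).

Definition in_Lp d (T : measurableType d) (R : realType)
    (mu : {measure set T -> \bar R}) (p : R) (f : T -> R) : Prop :=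
  measurable_fun setT f /\ finite_norm mu p%:E f.

(* || T_phi^j f - T_phi^j g ||_p = || (f - g) o phi^j ||_p *)
Definition comp_iter_dist d (T : measurableType d) (R : realType)
    (mu : {measure set T -> \bar R}) (p : R) (phi : T -> T)
    (f g : T -> R) (j : nat) : \bar R :=
  Lnorm mu p%:E (EFin \o (fun x => f (iter j phi x) - g (iter j phi x))).

(* Elements of L^p are a.e.-classes; Gamma is given by a set of
   representatives, pairwise not a.e. equal, so that Gamma is in bijection
   with an (uncountable) subset of L^p(mu). *)
Definition comp_distr_chaotic d (T : measurableType d) (R : realType)
    (mu : {measure set T -> \bar R}) (p : R) (phi : T -> T) : Prop :=
  exists Gamma : set (T -> R),
    [/\ (forall f, Gamma f -> in_Lp mu p f),
        (forall f g, Gamma f -> Gamma g -> f = g %[ae mu] -> f = g),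
        ~ countable Gamma &
    exists2 eps : R, 0 < eps &
      forall delta : R, 0 < delta ->
      forall f g, Gamma f -> Gamma g -> f <> g ->
        lower_dens R [set j | (comp_iter_dist mu p phi f g j < eps%:E)%E] = 0%E
        /\ upper_dens R [set j | (comp_iter_dist mu p phi f g j < delta%:E)%E] = 1%E].

(* Main.v *)
Require Import Defs.
From HB Require Import structures.
From mathcomp Require Import all_boot all_order all_algebra.
From mathcomp Require Import all_classical all_reals all_analysis.
From mathcomp Require Import measurable_realfun lra ring.
Import Order.TTheory GRing.Theory Num.Theory.
Local Open Scope classical_set_scope.
Local Open Scope ring_scope.
Section Meas.
Context d (X : measurableType d) (R : realType) (mu : {measure set X -> \bar R}) (phi : X -> X) (c : R).
Hypothesis mphi : measurable_fun setT phi.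
Hypothesis c0 : 0 <= c.
Hypothesis hc : forall B : set X, measurable B -> (mu (phi @^-1` B) <= c%:E * mu B)%E.
Local Open Scope ereal_scope.

Lemma int_comp_le (g : X -> \bar R) : measurable_fun [set: X] g -> (forall x, 0 <= g x) ->
  \int[mu]_x g (phi x) <= c%:E * \int[mu]_x g x.
Proof.
move=> mg g0.
have -> : \int[mu]_x g (phi x) = \int[pushforward mu phi]_x g x.
  rewrite ge0_integral_pushforward //; by [].
pose cn : {nonneg R} := NngNum c0.
rewrite (_ : c%:E = cn%:num%:E) // -ge0_integral_mscale //.
apply: ge0_le_measure_integral => //.
Qed.

Lemma measurable_iter n : measurable_fun [set: X] (iter n phi).
Proof.
elim: n => [|n IH] /=; first exact: measurable_id.
exact: (measurableT_comp mphi IH).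
Qed.

Lemma int_iter_le n (g : X -> \bar R) : measurable_fun [set: X] g -> (forall x, 0 <= g x) ->
  \int[mu]_x g (iter n phi x) <= (c ^+ n)%:E * \int[mu]_x g x.
Proof.
move=> mg g0; elim: n => [|n IH]; first by rewrite expr0 mul1e.
under eq_integral do rewrite iterSr.
apply: (le_trans (@int_comp_le (fun x => g (iter n phi x)) _ _)) => //.
  exact: measurableT_comp mg (measurable_iter n).
rewrite exprS EFinM -muleA.
by apply: lee_wpmul2l; rewrite ?lee_fin.
Qed.

Lemma null_iter n (N : set X) : measurable N -> mu N = 0 -> mu (iter n phi @^-1` N) = 0.
Proof.
move=> mN N0; elim: n => [|n IH] //.
have -> : iter n.+1 phi @^-1` N = phi @^-1` (iter n phi @^-1` N).
  have E y : phi (iter n phi y) = iter n phi (phi y) by rewrite -iterS iterSr.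
  by apply/seteqP; split => x /=; rewrite E.
apply/eqP; rewrite eq_le measure_ge0 andbT.
have m1 : measurable (iter n phi @^-1` N).
  by rewrite -[X in measurable X]setTI; apply: measurable_iter.
by rewrite (le_trans (hc _ m1)) // IH mule0.
Qed.
End Meas.
Section Dens.
Variable R : realType.
Local Notation r := (dens_ratio R).
Definition cnt (A : set nat) N := (\sum_(1 <= j < N.+1) (j \in A : nat))%N.

Lemma rE A N : r A N = (cnt A N)%:R / N%:R. Proof. by []. Qed.

Lemma cnt_le A N : (cnt A N <= N)%N.
Proof.
rewrite /cnt; apply: (@leq_trans (\sum_(1 <= j < N.+1) 1)%N).
  by apply: leq_sum => j _; exact: leq_b1.
by rewrite sum_nat_const_nat subn1 muln1.
Qed.

Lemma r_ge0 A N : 0 <= r A N.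
Proof. by rewrite rE divr_ge0. Qed.

Lemma r_le1 A N : r A N <= 1.
Proof.
rewrite rE; case: N => [|N]; first by rewrite invr0 mulr0.
by rewrite ler_pdivrMr ?ltr0Sn // mul1r ler_nat cnt_le.
Qed.

Lemma cnt_compl A N : (cnt (~` A) N + cnt A N = N)%N.
Proof.
rewrite /cnt -big_split /= (eq_bigr (fun=> 1%N)); last first.
  by move=> i _; rewrite in_setC; case: (i \in A).
by rewrite sum_nat_const_nat subn1 muln1.
Qed.

Lemma r_compl A N : (0 < N)%N -> r (~` A) N = 1 - r A N.
Proof.
move=> N0; rewrite !rE.
have h : (cnt (~` A) N)%:R + (cnt A N)%:R = N%:R :> R by rewrite -natrD cnt_compl.
rewrite -[X in X / _ = _](addrK (cnt A N)%:R) h mulrBl divff //.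
by rewrite pnatr_eq0 -lt0n.
Qed.

Lemma cnt_mono (A B : set nat) N : (forall j, (0 < j <= N)%N -> A j -> B j) -> (cnt A N <= cnt B N)%N.
Proof.
move=> AB; rewrite /cnt big_nat_cond [X in (_ <= X)%N]big_nat_cond.
apply: leq_sum => j /andP[/andP[j1 jN] _].
case: (boolP (j \in A)) => // /set_mem Aj.
by rewrite mem_set //; apply: AB => //; rewrite j1 -ltnS.
Qed.

Lemma r_mono (A B : set nat) N : (forall j, (0 < j <= N)%N -> A j -> B j) -> r A N <= r B N.
Proof.
by move=> AB; rewrite !rE ler_wpM2r // ler_nat cnt_mono.
Qed.

Lemma cnt_shift B m N : (cnt B (N + m) <= m + cnt [set j | B (j + m)] N)%N.
Proof.
rewrite /cnt (@big_cat_nat _ _ _ m.+1) //=; last by rewrite ltnS leq_addl.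
apply: leq_add; first exact: (cnt_le B m).
rewrite -(add1n m) big_addn -addSn addnK.
apply: leq_sum => i _.
by case: (boolP (i + m \in B)) => // /set_mem h; rewrite mem_set.
Qed.

Definition freq1 A := forall e : R, 0 < e -> forall M, exists2 N, (M <= N)%N & 1 - e < r A N.
Definition freq0 A := forall e : R, 0 < e -> forall M, exists2 N, (M <= N)%N & r A N < e.


Lemma ud1_freq A : upper_dens R A = 1%E -> freq1 A.
Proof.
rewrite /upper_dens limn_esup_lim => U e e0 M.
set u := (fun N => (r A N)%:E) in U.
have L : limn (esups u) = ereal_inf (range (esups u)).
  by apply: cvg_lim => //; exact: cvg_esups_inf.
rewrite L in U.
have h1 : (1 <= esups u M)%E by rewrite -U; apply: ereal_inf_lbound; exists M.
have : ((1 - e)%:E < ereal_sup (sdrop u M))%E.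
  by apply: (lt_le_trans _ h1); rewrite lte_fin ltrBlDr ltrDl.
move=> /ereal_sup_gt[_ [N MN <-]]; rewrite lte_fin => h.
by exists N.
Qed.

Lemma freq_ud1 A : freq1 A -> upper_dens R A = 1%E.
Proof.
move=> F; rewrite /upper_dens limn_esup_lim.
set u := (fun N => (r A N)%:E).
have -> : esups u = fun=> 1%E.
  apply/funext => M; apply/eqP; rewrite eq_le; apply/andP; split.
    by apply: ge_ereal_sup => _ [N _ <-]; rewrite lee_fin r_le1.
  apply/lee_subgt0Pr => e e0; have [N MN h] := F e e0 M.
  apply: le_ereal_sup_tmp; exists (u N); first by exists N.
  by rewrite /u -EFinB lee_fin ltW.
by apply: cvg_lim => //; exact: cvg_cst.
Qed.

Lemma ld0_freq A : lower_dens R A = 0%E -> freq0 A.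
Proof.
rewrite /lower_dens limn_einf_lim => U e e0 M.
set u := (fun N => (r A N)%:E) in U.
have L : limn (einfs u) = ereal_sup (range (einfs u)).
  by apply: cvg_lim => //; exact: cvg_einfs_sup.
rewrite L in U.
have h1 : (einfs u M <= 0)%E by rewrite -U; apply: ereal_sup_ubound; exists M.
have : (ereal_inf (sdrop u M) < e%:E)%E.
  by apply: (le_lt_trans h1); rewrite lte_fin.
move=> /ereal_inf_lt[_ [N MN <-]]; rewrite lte_fin => h.
by exists N.
Qed.

Lemma freq_ld0 A : freq0 A -> lower_dens R A = 0%E.
Proof.
move=> F; rewrite /lower_dens limn_einf_lim.
set u := (fun N => (r A N)%:E).
have -> : einfs u = fun=> 0%E.
  apply/funext => M; apply/eqP; rewrite eq_le; apply/andP; split; last first.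
    by apply: le_ereal_inf_tmp => _ [N _ <-]; rewrite lee_fin r_ge0.
  apply/lee_addgt0Pr => e e0; have [N MN h] := F e e0 M.
  apply: ge_ereal_inf; exists (u N); first by exists N.
  by rewrite /u add0e lee_fin ltW.
by apply: cvg_lim => //; exact: cvg_cst.
Qed.

Lemma freq0_compl A : freq0 A -> freq1 (~` A).
Proof.
move=> F e e0 M; have [N MN h] := F e e0 (maxn M 1).
exists N; first by apply: leq_trans MN; rewrite leq_maxl.
rewrite r_compl; last by apply: leq_trans MN; rewrite leq_maxr.
by rewrite ltrD2l ltrN2.
Qed.

Lemma freq1_compl A : freq1 A -> freq0 (~` A).
Proof.
move=> F e e0 M; have [N MN h] := F e e0 (maxn M 1).
exists N; first by apply: leq_trans MN; rewrite leq_maxl.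
rewrite r_compl; last by apply: leq_trans MN; rewrite leq_maxr.
by rewrite ltrBlDr addrC -ltrBlDr.
Qed.

Lemma freq1_mono (A B : set nat) : (forall j, A j -> B j) -> freq1 A -> freq1 B.
Proof.
move=> AB F e e0 M; have [N MN h] := F e e0 M; exists N => //.
by apply: (lt_le_trans h); apply: r_mono => j _; exact: AB.
Qed.

Lemma freq0_mono (A B : set nat) : (forall j, B j -> A j) -> freq0 A -> freq0 B.
Proof.
move=> AB F e e0 M; have [N MN h] := F e e0 M; exists N => //.
by apply: le_lt_trans h; apply: r_mono => j _; exact: AB.
Qed.

Lemma freq1_ex0 A : freq1 A -> exists j, A j.
Proof.
move=> F; have [N _ h] := F 1 ltr01 0%N.
have [//|nA] := pselect (exists j, A j).
move: h; rewrite subrr rE (_ : cnt A N = 0%N) ?mul0r ?ltxx //.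
rewrite /cnt big1 //= => j _.
by case: (boolP (j \in A)) => // /set_mem Aj; exfalso; apply: nA; exists j.
Qed.


Lemma freq1_shift B m : freq1 B -> freq1 [set j | B (j + m)%N].
Proof.
move=> F e e0 M.
set K0 := (Num.Def.trunc (2 * m%:R / e)).+1.
have e20 : 0 < e / 2 by rewrite divr_gt0.
have [N' N'M h] := F (e/2) e20 (M + K0 + m)%N.
have mN' : (m <= N')%N by apply: leq_trans N'M; rewrite leq_addl.
set N := (N' - m)%N.
have NN : N' = (N + m)%N by rewrite /N subnK.
have MN : (M + K0 <= N)%N by rewrite /N leq_subRL // addnC.
exists N; first by apply: leq_trans MN; rewrite leq_addr.
have K0N : (K0 <= N)%N by apply: leq_trans MN; rewrite leq_addl.
have Npos : 0 < N%:R :> R by rewrite ltr0n; apply: leq_trans K0N.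
have h2 : m%:R / N%:R < e / 2.
  rewrite ltr_pdivrMr // -ltr_pdivrMl //.
  apply: (@lt_le_trans _ _ K0%:R); last by rewrite ler_nat.
  by rewrite invf_div mulrAC; exact: truncnS_gt.
have h3 : r B N' <= (cnt B N')%:R / N%:R.
  rewrite rE ler_wpM2l // lef_pV2 ?posrE ?ler_nat ?leq_subr //.
  by rewrite ltr0n NN addn_gt0 -(ltr0n R) Npos.
have h4 : (cnt B N')%:R / N%:R <= m%:R / N%:R + r [set j | B (j + m)%N] N.
  by rewrite rE -mulrDl ler_wpM2r // -natrD ler_nat NN cnt_shift.
lra.
Qed.

Lemma freq1_ex A : freq1 A -> forall M, exists j, (M <= j)%N /\ A j.
Proof.
move=> F M; have [j Aj] := @freq1_ex0 _ (freq1_shift A M F).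
by exists (j + M)%N; split => //; rewrite leq_addl.
Qed.

End Dens.

Lemma pow_lt_iff (R : realType) (I : \bar R) (t s : R) : 0 < s -> (0 <= I)%E -> 0 < t ->
  (I `^ s^-1 < t%:E)%E = (I < (t `^ s)%:E)%E.
Proof.
case: I => [x| |] // s0 + t0.
- rewrite lee_fin => x0; rewrite poweR_EFin !lte_fin; apply/idP/idP => h.
  + have := @gt0_ltr_powR _ s s0 (x `^ s^-1) t; rewrite -powRrM mulVf ?gt_eqF // powRr1 //.
    by apply; rewrite // nnegrE ?powR_ge0 ?ltW.
  + have si : 0 < s^-1 by rewrite invr_gt0.
    have := @gt0_ltr_powR _ (s^-1) si x (t `^ s); rewrite -powRrM mulfV ?gt_eqF // powRr1 ?ltW //.
    by apply; rewrite // nnegrE ?powR_ge0.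
- by move=> _; rewrite poweRyr ?invr_neq0 ?gt_eqF.
Qed.

Section Constr.
Context d (X : measurableType d) (R : realType) (mu : {measure set X -> \bar R}) (phi : X -> X) (c : R).
Hypothesis mphi : measurable_fun setT phi.
Hypothesis c0 : 0 <= c.
Hypothesis hc : forall B : set X, measurable B -> (mu (phi @^-1` B) <= c%:E * mu B)%E.
Variables (p : R) (f g : X -> R) (eps : R).
Hypothesis p0 : 0 < p.
Hypotheses (mf : measurable_fun setT f) (mg : measurable_fun setT g).
Hypothesis eps0 : 0 < eps.
Let H x := `|f x - g x| `^ p.
Let a j := (\int[mu]_x (H (iter j phi x))%:E)%E.
Let Sη (η : R) := [set j | (a j < η%:E)%E].
Hypothesis hS : forall η, 0 < η -> freq1 R (Sη η).
Hypothesis hB : freq1 R [set j | (eps%:E <= a j)%E].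

Local Open Scope ereal_scope.

Lemma H_ge0 x : (0 <= H x)%R. Proof. exact: powR_ge0. Qed.

Lemma mH : measurable_fun [set: X] H.
Proof.
apply: (measurableT_comp (measurable_powR _)).
apply: measurableT_comp; first exact: normr_measurable.
exact: measurable_funB.
Qed.

Lemma mHi j : measurable_fun [set: X] (fun x => (H (iter j phi x))%:E).
Proof.
apply/measurable_EFinP; apply: (measurableT_comp mH).
exact: measurable_iter.
Qed.

Lemma a_ge0 j : 0 <= a j.
Proof. by apply: integral_ge0 => x _; rewrite lee_fin H_ge0. Qed.

Lemma a_shift i j : a (j + i) <= (c ^+ i)%:E * a j.
Proof.
have := @int_iter_le _ _ _ mu phi c mphi c0 hc i _ (mHi j) (fun x => H_ge0 _).
by under eq_integral do rewrite -iterD.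
Qed.

Let CC := (Num.max c 1)%R.
Lemma CC1 : (1 <= CC)%R. Proof. by rewrite le_max lexx orbT. Qed.
Lemma CC0 : (0 < CC)%R. Proof. exact: (lt_le_trans ltr01 CC1). Qed.

Lemma a_shiftC i j k : (i <= k)%N -> a (j + i) <= (CC ^+ k)%:E * a j.
Proof.
move=> ik; apply: (le_trans (a_shift i j)); apply: lee_wpmul2r; first exact: a_ge0.

rewrite lee_fin; apply: (@le_trans _ _ (CC ^+ i)%R).
  apply: lerXn2r; rewrite ?nnegrE //; [exact: ltW CC0 | by rewrite le_max lexx].
exact: (ler_weXn2l CC1 ik).
Qed.


Definition pick_m (ρ : R) : nat := xget 0%N [set m | a m < ρ%:E].
Lemma pick_mP ρ : (0 < ρ)%R -> a (pick_m ρ) < ρ%:E.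
Proof.
move=> r0; apply: (@xgetPex _ 0%N [set m | a m < ρ%:E]).
have [m hm] := @freq1_ex0 R _ (hS ρ r0); by exists m.
Qed.

Definition pick_N (η : R) (K : nat) : nat :=
  xget 0%N [set N | (K <= N)%N /\ (1 - (K.+1%:R)^-1 < dens_ratio R (Sη η) N)%R].
Lemma pick_NP η K : (0 < η)%R ->
  (K <= pick_N η K)%N /\ (1 - (K.+1%:R)^-1 < dens_ratio R (Sη η) (pick_N η K))%R.
Proof.
move=> e0; apply: (@xgetPex _ 0%N [set N | (K <= N)%N /\ (1 - (K.+1%:R)^-1 < dens_ratio R (Sη η) N)%R]).
have Ki : (0 < (K.+1%:R)^-1 :> R)%R by rewrite invr_gt0 ltr0Sn.
have [N KN h] := hS η e0 _ Ki K.
by exists N.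
Qed.

Definition ρ (k M : nat) : R := (((2 ^ k.+1)%:R * (2 ^ k.+1)%:R) * (k.+1%:R * CC ^+ M))^-1.
Definition η (K Mm : nat) : R := ((K.+1%:R * (2 ^ K.+1)%:R) * (K.+1%:R * CC ^+ Mm))^-1.

Lemma ρ_gt0 k M : (0 < ρ k M)%R.
Proof. by rewrite invr_gt0 !mulr_gt0 ?ltr0n ?expn_gt0 // exprn_gt0 // CC0. Qed.
Lemma η_gt0 k M : (0 < η k M)%R.
Proof. by rewrite invr_gt0 !mulr_gt0 ?ltr0n ?expn_gt0 // exprn_gt0 // CC0. Qed.

Fixpoint st (K : nat) : nat * nat * nat * nat :=
  match K with
  | 0 => let m := pick_m (ρ 0 0) in let N := pick_N (η 0 m) 0 in (m, N, N, m)
  | K'.+1 => let: (_, _, MN, Mm) := st K' in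
    let m := pick_m (ρ K'.+1 MN) in let Mm' := maxn Mm m in
    let N := pick_N (η K'.+1 Mm') K'.+1 in (m, N, maxn MN N, Mm')
  end.

Definition mm k := (st k).1.1.1.
Definition NN k := (st k).1.1.2.
Definition MN k := (st k).1.2.
Definition Mm k := (st k).2.
Definition MNp k := if k is k'.+1 then MN k' else 0%N.

Lemma mmE k : mm k = pick_m (ρ k (MNp k)).
Proof. case: k => [|k] //=; rewrite /mm /MN /=; by case: (st k) => [[[? ?] ?] ?]. Qed.
Lemma NNE k : NN k = pick_N (η k (Mm k)) k.
Proof. case: k => [|k] //=; rewrite /NN /Mm /=; by case: (st k) => [[[? ?] ?] ?]. Qed.
Lemma MmS k : Mm k.+1 = maxn (Mm k) (mm k.+1).
Proof. rewrite /mm /Mm /=; by case: (st k) => [[[? ?] ?] ?]. Qed.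
Lemma MNS k : MN k.+1 = maxn (MN k) (NN k.+1).
Proof. rewrite /NN /MN /=; by case: (st k) => [[[? ?] ?] ?]. Qed.
Lemma Mm0 : Mm 0 = mm 0. Proof. by []. Qed.
Lemma MN0 : MN 0 = NN 0. Proof. by []. Qed.

Lemma mm_le k K : (k <= K)%N -> (mm k <= Mm K)%N.
Proof.
elim: K => [|K IH]; first by rewrite leqn0 => /eqP ->; rewrite Mm0.
rewrite leq_eqVlt => /orP[/eqP ->|]; first by rewrite MmS leq_maxr.
by rewrite ltnS => /IH h; rewrite MmS (leq_trans h) // leq_maxl.
Qed.

Lemma NN_le k K : (k <= K)%N -> (NN k <= MN K)%N.
Proof.
elim: K => [|K IH]; first by rewrite leqn0 => /eqP ->; rewrite MN0.
rewrite leq_eqVlt => /orP[/eqP ->|]; first by rewrite MNS leq_maxr.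
by rewrite ltnS => /IH h; rewrite MNS (leq_trans h) // leq_maxl.
Qed.

Lemma MN_mono K K' : (K <= K')%N -> (MN K <= MN K')%N.
Proof.
elim: K' => [|K' IH]; first by rewrite leqn0 => /eqP ->.
rewrite leq_eqVlt => /orP[/eqP ->//|]; rewrite ltnS => /IH h.
by rewrite MNS (leq_trans h) // leq_maxl.
Qed.

Lemma a_mm k : a (mm k) < (ρ k (MNp k))%:E.
Proof. by rewrite mmE; apply: pick_mP; exact: ρ_gt0. Qed.

Lemma NN_prop K : (K <= NN K)%N /\ (1 - (K.+1%:R)^-1 < dens_ratio R (Sη (η K (Mm K))) (NN K))%R.
Proof. by rewrite NNE; apply: pick_NP; exact: η_gt0. Qed.


Definition T k j := ((k.+1%:R)%:E * a (mm k + j))%E.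

Lemma T_ge0 k j : 0 <= T k j.
Proof. by rewrite /T mule_ge0 // a_ge0. Qed.

Lemma CCX_neq0 M : (CC ^+ M != 0)%R.
Proof. by rewrite expf_neq0 // gt_eqF // CC0. Qed.

Lemma TB1 k j : (j <= MNp k)%N -> T k j <= (((2^k.+1)%:R * (2^k.+1)%:R)^-1)%:E.
Proof.
move=> hj.
have hA : a (mm k + j) <= (CC ^+ MNp k)%:E * a (mm k) := a_shiftC j (mm k) (MNp k) hj.
rewrite /T; apply: (le_trans (lee_wpmul2l _ hA)); first by rewrite lee_fin.
apply: (le_trans (lee_wpmul2l _ (lee_wpmul2l _ (ltW (a_mm k))))).
- by rewrite lee_fin.
- by rewrite lee_fin exprn_ge0 // ltW // CC0.
rewrite -!EFinM lee_fin.
have E : (k.+1%:R * (CC ^+ MNp k * ρ k (MNp k)) = ((2^k.+1)%:R * (2^k.+1)%:R)^-1 :> R)%R.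
  rewrite /ρ mulrA invfM mulrCA mulfV ?mulr1 // mulf_neq0 ?CCX_neq0 //.
by rewrite E.
Qed.


Lemma TB2 K j k : (j <= NN K)%N -> a j < (η K (Mm K))%:E -> (k <= K)%N ->
  T k j <= ((K.+1%:R)^-1 * ((2^k.+1)%:R)^-1)%:E.
Proof.
move=> hj hη hk.
have hA : a (mm k + j) <= (CC ^+ Mm K)%:E * a j.
  by rewrite addnC; exact: (a_shiftC (mm k) j (Mm K) (mm_le _ _ hk)).
rewrite /T; apply: (le_trans (lee_wpmul2l _ hA)); first by rewrite lee_fin.
apply: (le_trans (lee_wpmul2l _ (lee_wpmul2l _ (ltW hη)))).
- by rewrite lee_fin.
- by rewrite lee_fin exprn_ge0 // ltW // CC0.
rewrite -!EFinM lee_fin.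
apply: (@le_trans _ _ (K.+1%:R * (CC ^+ Mm K * η K (Mm K)))%R).
  apply: ler_wpM2r; last by rewrite ler_nat.
  by rewrite mulr_ge0 ?exprn_ge0 ?ltW ?CC0 ?η_gt0.
rewrite /η mulrA invfM mulrCA mulfV ?mulr1; last by rewrite mulf_neq0 ?CCX_neq0.
rewrite -invfM lef_pV2 ?posrE ?mulr_gt0 ?ltr0n ?expn_gt0 // ler_wpM2l // ler_nat.
by rewrite leq_pexp2l // ltnS.
Qed.

Lemma TB3 K j k : (j <= NN K)%N -> (K < k)%N ->
  T k j <= ((K.+1%:R)^-1 * ((2^k.+1)%:R)^-1)%:E.
Proof.
move=> hj hk.
have hj' : (j <= MNp k)%N.
  case: k hk => [//|k]; rewrite ltnS /= => hk.
  by apply: (leq_trans hj); apply: (leq_trans (NN_le _ _ (leqnn K))); exact: MN_mono.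
apply: (le_trans (TB1 _ _ hj')); rewrite lee_fin -!invfM.
rewrite lef_pV2 ?posrE ?mulr_gt0 ?ltr0n ?expn_gt0 // ler_wpM2r // ler_nat.
apply: (leq_trans _ (ltnW (ltn_expl k.+1 (isT : (1 < 2)%N)))).
by rewrite ltnS ltnW.
Qed.


Definition Hstar x := \sum_(k <oo) ((k.+1%:R * H (iter (mm k) phi x))%:E).

Lemma Hstar_ge0 x : 0 <= Hstar x.
Proof. by apply: nneseries_ge0 => k _ _; rewrite lee_fin mulr_ge0 ?H_ge0. Qed.

Lemma mterm k : measurable_fun [set: X] (fun x => (k.+1%:R * H (iter (mm k) phi x))%:E).
Proof.
apply/measurable_EFinP; apply: measurable_funM; first exact: measurable_cst.
by apply: (measurableT_comp mH); exact: measurable_iter.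
Qed.

Lemma mHstar : measurable_fun [set: X] Hstar.
Proof.
apply: (@ge0_emeasurable_sum _ _ _ setT (fun k x => (k.+1%:R * H (iter (mm k) phi x))%:E) xpredT).
- by move=> k x _ _; rewrite lee_fin mulr_ge0 ?H_ge0.
- by move=> k _; exact: mterm.
Qed.

Lemma int_Hstar_iter j : \int[mu]_x Hstar (iter j phi x) = \sum_(k <oo) T k j.
Proof.
rewrite /Hstar integral_nneseries //.
- apply: eq_eseriesr => k _; rewrite /T.
  under eq_integral do rewrite EFinM -iterD.
  rewrite ge0_integralZl_EFin //.
  + by move=> x _; rewrite lee_fin H_ge0.
  + exact: mHi.
- move=> k; apply: (measurableT_comp (mterm k)); exact: measurable_iter.
- by move=> k x _; rewrite lee_fin mulr_ge0 ?H_ge0.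
Qed.

Lemma int_Hstar_small K j : (j <= NN K)%N -> a j < (η K (Mm K))%:E ->
  \int[mu]_x Hstar (iter j phi x) <= ((K.+1%:R)^-1)%:E.
Proof.
move=> hj hη; rewrite int_Hstar_iter.
apply: le_trans (epsilon_trick0 xpredT _); last by rewrite invr_ge0.
apply: lee_nneseries => [k _ _|k _]; first exact: T_ge0.
have [kK|Kk] := leqP k K; first exact: TB2.
exact: TB3.
Qed.

Lemma int_Hstar0 : \int[mu]_x Hstar x <= (1%R)%:E.
Proof.
have -> : \int[mu]_x Hstar x = \int[mu]_x Hstar (iter 0 phi x) by [].
rewrite int_Hstar_iter.
apply: (le_trans _ (@epsilon_trick0 R 1%R xpredT ler01)).
apply: lee_nneseries => [k _ _|k _]; first exact: T_ge0.
apply: (le_trans (TB1 _ _ (leq0n _))); rewrite lee_fin div1r.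
rewrite lef_pV2 ?posrE ?mulr_gt0 ?ltr0n ?expn_gt0 //.
by rewrite -natrM ler_nat leq_pmulr // expn_gt0.
Qed.


Lemma ae_iter j (P : X -> Prop) : {ae mu, forall x, P x} -> {ae mu, forall x, P (iter j phi x)}.
Proof.
move=> [N [mN N0 sub]]; exists (iter j phi @^-1` N); split.
- by rewrite -[X in measurable X]setTI; apply: measurable_iter.
- exact: (@null_iter _ _ _ mu phi c mphi hc j N mN N0).
- by move=> x /= nP; apply: sub.
Qed.

Lemma Hstar_fin : {ae mu, forall x, Hstar x \is a fin_num}.
Proof.
have : mu.-integrable setT Hstar.
  apply/integrableP; split; first exact: mHstar.
  under eq_integral do rewrite gee0_abs ?Hstar_ge0 //.
  by apply: le_lt_trans int_Hstar0 _; exact: ltry.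
move/(integrable_ae measurableT); apply: filterS => x; apply; done.
Qed.

Lemma mfineH j : measurable_fun [set: X] (fun x => fine (Hstar (iter j phi x))).
Proof.
apply: (measurableT_comp (fine_measurable measurableT)).
apply: (measurableT_comp mHstar); exact: measurable_iter.
Qed.

Definition G j := \int[mu]_x (fine (Hstar (iter j phi x)))%:E.

Lemma G_ge0 j : 0 <= G j.
Proof. by apply: integral_ge0 => x _; rewrite lee_fin fine_ge0 ?Hstar_ge0. Qed.

Lemma G_le j : G j <= \int[mu]_x Hstar (iter j phi x).
Proof.
apply: ge0_le_integral => //.
- by move=> x _; rewrite lee_fin fine_ge0 ?Hstar_ge0.
- by apply/measurable_EFinP; exact: mfineH.
- by apply: (measurableT_comp mHstar); exact: measurable_iter.
- move=> x _; move: (Hstar_ge0 (iter j phi x)).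
  by case: (Hstar (iter j phi x)) => [r| |] //= _; exact: leey.
Qed.

Lemma term_le_series (u : nat -> \bar R) k : (forall i, 0 <= u i) -> u k <= \sum_(i <oo) u i.
Proof.
move=> u0; apply: (le_trans _ (nneseries_lim_ge k.+1 (fun i _ _ => u0 i))).
by rewrite big_nat_recr //=; apply: leeDr; exact: sume_ge0.
Qed.

Lemma T_int k j : T k j = \int[mu]_x ((k.+1%:R * H (iter (mm k) phi (iter j phi x)))%:E).
Proof.
rewrite /T; under eq_integral do rewrite EFinM -iterD.
rewrite ge0_integralZl_EFin //.
+ by move=> x _; rewrite lee_fin H_ge0.
+ exact: mHi.
Qed.

Lemma G_ge j k : T k j <= G j.
Proof.
rewrite T_int; apply: ae_ge0_le_integral => //.
- by move=> x _; rewrite lee_fin mulr_ge0 ?H_ge0.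
- apply: (measurableT_comp (mterm k)); exact: measurable_iter.
- by move=> x _; rewrite lee_fin fine_ge0 ?Hstar_ge0.
- by apply/measurable_EFinP; exact: mfineH.
- apply: filterS (ae_iter j _ Hstar_fin) => x hx _; rewrite fineK //.
  apply: (@term_le_series (fun k => (k.+1%:R * H (iter (mm k) phi (iter j phi x)))%:E)).
  by move=> i; rewrite lee_fin mulr_ge0 ?H_ge0.
Qed.

Lemma Gpos : exists j, eps%:E <= G j.
Proof.
have [i [hi Bi]] := @freq1_ex R _ hB (mm 0).
exists (i - mm 0)%N; apply: le_trans (G_ge _ 0).
by rewrite /T subnKC // mul1e.
Qed.


Variable q : R.
Hypothesis q0 : (0 < q)%R.

Definition w x := (fine (Hstar x) `^ q^-1)%R.

Lemma w_ge0 x : (0 <= w x)%R. Proof. exact: powR_ge0. Qed.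

Lemma mw : measurable_fun [set: X] w.
Proof.
apply: (measurableT_comp (measurable_powR _)).
exact: (measurableT_comp (fine_measurable measurableT) mHstar).
Qed.

Lemma wq x : (w x `^ q = fine (Hstar x))%R.
Proof. by rewrite /w -powRrM mulVf ?gt_eqF // powRr1 // fine_ge0 // Hstar_ge0. Qed.

Lemma int_formula l l' j :
  \int[mu]_x (`|(EFin \o (fun x => l * w (iter j phi x) - l' * w (iter j phi x))%R) x| `^ q) =
  (`|l - l'| `^ q)%:E * G j.
Proof.
rewrite /G -ge0_integralZl_EFin //.
- apply: eq_integral => x _ /=.
  by rewrite -mulrBl normrM (ger0_norm (w_ge0 _)) powRM ?w_ge0 // wq EFinM.
- by move=> x _; rewrite lee_fin fine_ge0 ?Hstar_ge0.
- by apply/measurable_EFinP; exact: mfineH.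
Qed.

Lemma dist_lt l l' j t : (0 < t)%R ->
  (comp_iter_dist mu q phi (fun x => l * w x)%R (fun x => l' * w x)%R j < t%:E) =
  ((`|l - l'| `^ q)%:E * G j < (t `^ q)%:E).
Proof.
move=> t0; rewrite /comp_iter_dist unlock int_formula pow_lt_iff //.
by rewrite mule_ge0 ?G_ge0 // lee_fin powR_ge0.
Qed.

Lemma not_w0 : ~ {ae mu, forall x, w x = 0%R}.
Proof.
move=> h; have [j Gj] := Gpos.
have : G j <= \int[mu]_x (cst 0 x) .
  apply: ae_ge0_le_integral => //.
  - by move=> x _; rewrite lee_fin fine_ge0 ?Hstar_ge0.
  - by apply/measurable_EFinP; exact: mfineH.
  - apply: filterS (ae_iter j _ h) => x hx _ /=.
    by rewrite -wq hx powR0 ?gt_eqF.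
rewrite integral0 => G0.
by have := le_trans Gj G0; rewrite lee_fin leNgt eps0.
Qed.


Lemma trunc_lt (x : R) (n : nat) : (0 < x)%R -> (Num.Def.trunc x^-1 <= n)%N -> ((n.+1%:R)^-1 < x)%R.
Proof.
move=> x0 hn.
have h : (x^-1 < n.+1%:R)%R.
  by apply: (lt_le_trans (truncnS_gt _)); rewrite ler_nat ltnS.
by rewrite -[X in (_ < X)%R](invrK x) ltf_pV2 ?posrE ?invr_gt0 ?ltr0n.
Qed.

Lemma DC_q : comp_distr_chaotic mu q phi.
Proof.
pose W := [set F : X -> R | exists2 l : R, (0 < l <= 1)%R & F = (fun x => l * w x)%R].
exists W; split.
- move=> F [l /andP[l0 l1] ->]; split.
    by apply: measurable_funM; [exact: measurable_cst | exact: mw].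
  rewrite /finite_norm.
  have -> : Lnorm mu q%:E (EFin \o (fun x => l * w x)%R) =
      comp_iter_dist mu q phi (fun x => l * w x)%R (fun x => 0 * w x)%R 0.
    by rewrite /comp_iter_dist; apply: eq_Lnorm => x /=; rewrite mul0r subr0.
  rewrite /comp_iter_dist unlock int_formula; apply: poweR_lty.
  have G0f : G 0 \is a fin_num.
    rewrite ge0_fin_numE ?G_ge0 //; apply: (le_lt_trans (G_le 0)).
    by apply: (le_lt_trans int_Hstar0); exact: ltry.
  by rewrite -(fineK G0f) -EFinM ltry.
- move=> F F' [l hl ->] [l' hl' ->] hae.
  have [->//|ll] := eqVneq l l'.
  exfalso; apply: not_w0; apply: filterS hae => x /= h.
  move/eqP: (h I); rewrite -subr_eq0 -mulrBl mulf_eq0 subr_eq0 (negbTE ll) /=.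
  by move/eqP.
- move=> cW.
  pose I := [set l : R | (0 < l <= 1)%R].
  have cI : countable I.
    move/countable_injP: cW => [h hinj]; apply/countable_injP.
    exists (fun l => h (fun x => l * w x)%R) => l l'; rewrite !inE => hl hl' E.
    have FE := hinj _ _ (mem_set (ex_intro2 _ _ l hl erefl))
                        (mem_set (ex_intro2 _ _ l' hl' erefl)) E.
    have [//|ll] := eqVneq l l'.
    exfalso; apply: not_w0; apply: aeW => x.
    move/eqP: (congr1 (fun F => F x) FE); rewrite /= -subr_eq0 -mulrBl mulf_eq0 subr_eq0 (negbTE ll) /=.
    by move/eqP.
  have := countable_lebesgue_measure0 cI.
  have -> : I = [set` `]0%R, 1%R]].
    by apply/seteqP; split => x; rewrite /= in_itv.
  rewrite lebesgue_measure_itv /= lte_fin ltr01 oppr0 adde0 => /eqP.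
  by rewrite eqe oner_eq0.
- exists 1%R => // δ δ0 F F' [l /andP[l0 l1] ->] [l' /andP[l'0 l'1] ->] neq.
  have ll : l != l' by apply/eqP => E; apply: neq; rewrite E.
  set θq := (`|l - l'| `^ q)%R.
  have θ0 : (0 < θq)%R by rewrite powR_gt0 // normr_gt0 subr_eq0.
  have θ1 : (θq <= 1)%R.
    have h : (`|l - l'| <= 1)%R by rewrite ler_norml; apply/andP; split; lra.
    apply: (le_trans (ge0_ler_powR (ltW q0) _ _ h)); rewrite ?nnegrE //.
    by rewrite powR1.
  split.
  + apply: freq_ld0.
    set k := Num.Def.trunc ((eps * θq)^-1).
    have hk : (1 < θq * (k.+1%:R * eps))%R.
      have := trunc_lt _ _ (mulr_gt0 eps0 θ0) (leqnn k).
      rewrite -div1r ltr_pdivrMr ?ltr0n // => h.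
      by rewrite mulrC -mulrA mulrC.
    have F1 := @freq1_compl R _ (@freq1_shift R _ (mm k) hB).
    apply: freq0_mono F1 => j; rewrite /= -[X in _ < X]/((1%R)%:E) dist_lt ?ltr01 // powR1 /= => hd hD.
    have : ((θq * (k.+1%:R * eps))%:E <= θq%:E * G j).
      rewrite EFinM; apply: lee_wpmul2l; first by rewrite lee_fin ltW.
      apply: le_trans (G_ge j k); rewrite /T EFinM; apply: lee_wpmul2l => //.
      by rewrite addnC.
    move=> h; have := le_lt_trans h hd; rewrite lte_fin.
    by rewrite ltNge (ltW hk).
  + apply: freq_ud1 => e e0 M.
    set K := maxn M (maxn (Num.Def.trunc e^-1) (Num.Def.trunc ((δ `^ q)^-1))).
    have [KN hr] := NN_prop K.
    exists (NN K); first by apply: leq_trans KN; rewrite leq_maxl.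
    have hKe : ((K.+1%:R)^-1 < e)%R.
      apply: trunc_lt => //; apply: (leq_trans _ (leq_maxr _ _)); exact: leq_maxl.
    have hKd : ((K.+1%:R)^-1 < δ `^ q)%R.
      apply: trunc_lt; first exact: powR_gt0.
      apply: (leq_trans _ (leq_maxr _ _)); exact: leq_maxr.
    apply: (@lt_le_trans _ _ (dens_ratio R (Sη (η K (Mm K))) (NN K))).
      by apply: lt_trans hr; rewrite ltrD2l ltrN2.
    apply: r_mono => j /andP[_ hj] hSj; rewrite /= dist_lt //.
    have h1 := le_trans (G_le j) (int_Hstar_small K j hj hSj).
    have h2 : θq%:E * G j <= G j.
      by rewrite -[leRHS]mul1e; apply: lee_wpmul2r; rewrite ?G_ge0 ?lee_fin.
    by apply: (le_lt_trans h2); apply: (le_lt_trans h1); rewrite lte_fin.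
Qed.

End Constr.

Lemma one_dir d (X : measurableType d) (R : realType) (mu : {measure set X -> \bar R})
  (phi : X -> X) (c p q : R) :
  measurable_fun setT phi -> 0 <= c ->
  (forall B : set X, measurable B -> (mu (phi @^-1` B) <= c%:E * mu B)%E) ->
  0 < p -> 0 < q ->
  comp_distr_chaotic mu p phi -> comp_distr_chaotic mu q phi.
Proof.
move=> mphi c0 hc p0 q0 [Gamma [GL Gae Gunc [eps e0 Hdc]]].
have [[f [g [Gf [Gg fg]]]]|nex] := pselect (exists f g, Gamma f /\ Gamma g /\ f <> g); last first.
  exfalso; apply: Gunc; apply/countable_injP; exists (fun=> 0%N) => x y; rewrite !inE => hx hy _.
  by case: (pselect (x = y)) => // nxy; exfalso; apply: nex; exists x, y.
have [mf _] := GL f Gf; have [mg _] := GL g Gg.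
have dE j t : 0 < t -> (comp_iter_dist mu p phi f g j < t%:E)%E =
    (\int[mu]_x ((fun x0 => `|f x0 - g x0| `^ p) (iter j phi x))%:E < (t `^ p)%:E)%E.
  move=> t0; rewrite /comp_iter_dist unlock.
  rewrite (_ : (\int[mu]_x _ = \int[mu]_x ((`|f (iter j phi x) - g (iter j phi x)| `^ p)%:E))%E); last first.
    by apply: eq_integral => x _.
  rewrite pow_lt_iff //.
  by apply: integral_ge0 => x _; rewrite lee_fin powR_ge0.
have ep0 : 0 < eps `^ p by exact: powR_gt0.
apply: (@DC_q d X R mu phi c mphi c0 hc p f g (eps `^ p) mf mg ep0 _ _ q q0).
- move=> η η0.
  have ηp : 0 < η `^ p^-1 by exact: powR_gt0.
  have := (Hdc _ ηp f g Gf Gg fg).2 => /ud1_freq; apply: freq1_mono => j /=.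
  rewrite dE // -powRrM mulVf ?gt_eqF // powRr1 //; exact: ltW.
- have := (Hdc _ ltr01 f g Gf Gg fg).1 => /ld0_freq/freq0_compl; apply: freq1_mono => j /=.
  by rewrite dE // leNgt => /negP.
Qed.

Theorem mainTheorem2 (d : measure_display) (X : measurableType d) (R : realType)
    (mu : {measure set X -> \bar R}) (phi : X -> X) (c : R) (p p' : R) :
  sigma_finite setT mu ->
  measurable_fun setT phi ->
  0 < c ->
  (forall B : set X, measurable B -> (mu (phi @^-1` B) <= c%:E * mu B)%E) ->
  1 <= p -> 1 <= p' ->
  comp_distr_chaotic mu p phi <-> comp_distr_chaotic mu p' phi.
Proof.
move=> _ mphi c0 hc p1 p'1.
have p0 : 0 < p by apply: lt_le_trans p1.
have p'0 : 0 < p' by apply: lt_le_trans p'1.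
by split; apply: one_dir mphi (ltW c0) hc _ _.
Qed.
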